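(* Let $Z=(U,\Omega,\mathcal I)$ be a $3$-matroid. The following are equivalent: (1) $Z$ is tight and binary; (2) $Z$ is tight and strictly binary; (3) $Z=\mathcal Z(Q)$ for some sheltering matroid $Q=(M,\Omega)$ such that there exist a finite set $V$, a symmetric $V\times V$ matrix $A$ over $GF(2)$, and a labelling $U=\{u_1(v),u_2(v),u_3(v): v\in V\}$ with $\Omega=\{\{u_1(v),u_2(v),u_3(v)\}: v\in V\}$, for which $M$ is the column matroid of the $GF(2)$-matrix $(I\mid A\mid A+I)$ (rows indexed by $V$) whose $v$-columns in the three blocks are labelled $u_1(v),u_2(v),u_3(v)$ respectively.
   Context: Let $\Omega$ be a partition of a finite set $U$. $T\subseteq U$ is a transversal (subtransversal) of $\Omega$ if $|T\cap\omega|=1$ ($\le 1$) for all $\omega\in\Omega$; $\mathcal S(\Omega)$ denotes the set of subtransversals. A skew pair of $\omega\in\Omega$ is a $2$-element subset of $\omega$. A multimatroid over $(U,\Omega)$ is a triple $Z=(U,\Omega,\mathcal I)$ with $\mathcal I\subseteq\mathcal S(\Omega)$ such that (i) for each transversal $T$, $\{I\in\mathcal I: I\subseteq T\}$ is the family of independent sets of a matroid on $T$, and (ii) for every $I\in\mathcal I$ and every skew pair $\{x,y\}$ of some $\omega\in\Omega$ with $\omega\cap I=\emptyset$, $I\cup\{x\}\in\mathcal I$ or $I\cup\{y\}\in\mathcal I$. $Z$ is a $q$-matroid if every $\omega\in\Omega$ has size $q$; it is nondegenerate if every $\omega$ has size $>1$. For $S\in\mathcal S(\Omega)$, its rank is the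 largest size of a member of $\mathcal I$ contained in $S$. $Z$ is tight if it is nondegenerate and for every $S\in\mathcal S(\Omega)$ with $|S|=|\Omega|-1$, letting $\omega$ be the class disjoint from $S$, there is $x\in\omega$ with rank$(S\cup\{x\})=$ rank$(S)$. A sheltering matroid is a pair $Q=(M,\Omega)$ where $M$ is a matroid on $U$ and $\Omega$ a partition of $U$ such that for every independent set $I\in\mathcal S(\Omega)$ of $M$ and every skew pair $\{x,y\}$ of a class $\omega$ with $\omega\cap I=\emptyset$, $I\cup\{x\}$ or $I\cup\{y\}$ is independent in $M$. Then $\mathcal Z(Q)=(U,\Omega,\{I\in\mathcal S(\Omega): I\text{ independent in }M\})$ is a multimatroid, said to be sheltered by $Q$. $Q$ is strict if $r(M)\le|\Omega|$. A multimatroid $Z$ is binary if $Z=\mathcal Z(Q)$ for some sheltering matroid $Q=(M,\Omega)$ with $M$ representable over $GF(2)$, and strictly binary if moreover $Q$ can be chosen strict. *)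

(* Defs.v *)
From HB Require Import structures.
From mathcomp Require Import all_boot all_order all_algebra.
Set Implicit Arguments. Unset Strict Implicit. Unset Printing Implicit Defensive.
Import GRing.Theory.

Section Multimatroids.
Variable U : finType.

Definition subtransversal (Omega : {set {set U}}) (T : {set U}) : bool :=
  [forall w in Omega, #|T :&: w| <= 1].
Definition transversal (Omega : {set {set U}}) (T : {set U}) : bool :=
  [forall w in Omega, #|T :&: w| == 1].

Definition is_matroid (E : {set U}) (F : {set {set U}}) : Prop :=
  [/\ set0 \in F,
      (forall I : {set U}, I \in F -> I \subset E),
      (forall I J : {set U}, J \in F -> I \subset J -> I \in F) &
      (forall I J : {set U}, I \in F -> J \in F -> #|I| < #|J| ->
         exists2 x, x \in J :\: I & x |: I \in F)].

Definition skew_pair_cond (Omega : {set {set U}}) (F : {set {set U}}) : Prop :=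
  forall (I w : {set U}) (x y : U), I \in F -> subtransversal Omega I -> w \in Omega ->
    [disjoint I & w] -> x \in w -> y \in w -> x != y ->
    (x |: I \in F) \/ (y |: I \in F).

Definition multimatroid (Omega : {set {set U}}) (Ind : {set {set U}}) : Prop :=
  [/\ partition Omega [set: U],
      (forall I : {set U}, I \in Ind -> subtransversal Omega I),
      (forall T : {set U}, transversal Omega T ->
         is_matroid T [set I in Ind | I \subset T]) &
      skew_pair_cond Omega Ind].

Definition q_matroid (q : nat) (Omega Ind : {set {set U}}) : Prop :=
  multimatroid Omega Ind /\ forall w : {set U}, w \in Omega -> #|w| = q.

Definition nondegenerate (Omega : {set {set U}}) : Prop :=
  forall w : {set U}, w \in Omega -> 1 < #|w|.

Definition mrank (Ind : {set {set U}}) (S : {set U}) : nat :=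
  \max_(I in Ind | I \subset S) #|I|.

Definition tight (Omega Ind : {set {set U}}) : Prop :=
  nondegenerate Omega /\
  forall S w : {set U}, subtransversal Omega S -> #|S| = #|Omega|.-1 ->
    w \in Omega -> [disjoint S & w] ->
    exists2 x, x \in w & mrank Ind (x |: S) = mrank Ind S.

Definition sheltering (M Omega : {set {set U}}) : Prop :=
  [/\ is_matroid [set: U] M, partition Omega [set: U] & skew_pair_cond Omega M].

Definition sheltered_ind (M Omega : {set {set U}}) : {set {set U}} :=
  [set I in M | subtransversal Omega I].

Definition matroid_rank (M : {set {set U}}) : nat := \max_(I in M) #|I|.

(* column matroid over GF(2): S is independent iff the vectors col u, u in S,
   are linearly independent (i.e. the #|S| rows col u are row-free). *)
Definition col_indep (m : nat) (col : U -> 'rV['F_2]_m) (S : {set U}) : bool :=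
  \rank (\matrix_(i < #|S|, j < m) col (enum_val i) 0 j)%R == #|S|.

Definition column_matroid (m : nat) (col : U -> 'rV['F_2]_m) : {set {set U}} :=
  [set S | col_indep col S].

Definition binary_matroid (M : {set {set U}}) : Prop :=
  exists m (col : U -> 'rV['F_2]_m), M = column_matroid col.

Definition binary_mm (Omega Ind : {set {set U}}) : Prop :=
  exists M, [/\ sheltering M Omega, binary_matroid M & Ind = sheltered_ind M Omega].

Definition strictly_binary_mm (Omega Ind : {set {set U}}) : Prop :=
  exists M, [/\ sheltering M Omega, binary_matroid M,
                matroid_rank M <= #|Omega| & Ind = sheltered_ind M Omega].

End Multimatroids.

(* Condition (3): rows indexed by the finite set V (via enum_val on 'I_#|V|);
   lab v 0, lab v 1, lab v 2 = u_1(v), u_2(v), u_3(v). *)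
Definition unit_col (V : finType) (v : V) : 'rV['F_2]_#|V| :=
  (\row_(j < #|V|) (enum_val j == v)%:R)%R.
Definition A_col (V : finType) (A : V -> V -> 'F_2) (v : V) : 'rV['F_2]_#|V| :=
  (\row_(j < #|V|) A (enum_val j) v)%R.

Definition IAAI_sheltered (U : finType) (Omega Ind : {set {set U}}) : Prop :=
  exists M : {set {set U}},
    sheltering M Omega /\ Ind = sheltered_ind M Omega /\
    exists (V : finType) (A : V -> V -> 'F_2) (lab : V -> 'I_3 -> U),
      [/\ (forall x y, A x y = A y x),
          bijective (fun p : V * 'I_3 => lab p.1 p.2),
          Omega = [set [set lab v i | i : 'I_3] | v : V] &
          exists col : U -> 'rV['F_2]_#|V|,
            [/\ M = column_matroid col,
                (forall v, col (lab v (@Ordinal 3 0 isT)) = unit_col v),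
                (forall v, col (lab v (@Ordinal 3 1 isT)) = A_col A v) &
                (forall v, col (lab v (@Ordinal 3 2 isT)) = (A_col A v + unit_col v)%R)]].

(* Main.v *)
Require Import Defs.
From HB Require Import structures.
From mathcomp Require Import all_boot all_order all_algebra.
From mathcomp Require Import zify ring.
Import Defs.
Set Implicit Arguments. Unset Strict Implicit. Unset Printing Implicit Defensive.

Module P1.
Import GRing.Theory.

Section ColMat.
Variables (U : finType) (m : nat) (col : U -> 'rV['F_2]_m).

Definition MS (S : {set U}) : 'M['F_2]_(#|S|, m) :=
  (\matrix_(i < #|S|, j < m) col (enum_val i) 0 j)%R.

Lemma col_indepE S : col_indep col S = (\rank (MS S) == #|S|).
Proof. by []. Qed.

Lemma row_MS (S : {set U}) i : row i (MS S) = col (enum_val i).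
Proof. by apply/rowP => j; rewrite !mxE. Qed.

Lemma sub_MS (S : {set U}) u : u \in S -> (col u <= MS S)%MS.
Proof. by move=> uS; rewrite -(enum_rankK_in uS uS) -row_MS; apply: row_sub. Qed.

Lemma MS_subP (S : {set U}) n' (X : 'M_(n', m)) :
  reflect (forall u, u \in S -> (col u <= X)%MS) (MS S <= X)%MS.
Proof.
apply: (iffP row_subP) => H.
  by move=> u uS; have := H (enum_rank_in uS u); rewrite row_MS enum_rankK_in.
by move=> i; rewrite row_MS; apply: H; apply: enum_valP.
Qed.

Lemma MS_subset (S T : {set U}) : S \subset T -> (MS S <= MS T)%MS.
Proof. by move=> /subsetP ST; apply/MS_subP => u /ST; apply: sub_MS. Qed.

Lemma rank_MS S : \rank (MS S) <= #|S|.
Proof. exact: rank_leq_row. Qed.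

Lemma MSU1_sub (S : {set U}) x : (MS (x |: S) <= MS S)%MS = (col x <= MS S)%MS.
Proof.
apply/idP/idP => [H|cx]; first exact: submx_trans (sub_MS (setU11 x S)) H.
by apply/MS_subP => u; rewrite in_setU1 => /orP[/eqP->//|]; apply: sub_MS.
Qed.

Lemma indep_addP (S : {set U}) x : col_indep col S -> x \notin S ->
  col_indep col (x |: S) = ~~ (col x <= MS S)%MS.
Proof.
move=> /eqP rS xS.
have sub : (MS S <= MS (x |: S))%MS by apply: MS_subset; apply: subsetUr.
have [le1 le2] := mxrank_leqif_sup sub.
have cU : #|x |: S| = #|S|.+1 by rewrite cardsU1 xS.
have le3 := rank_MS (x |: S).
rewrite col_indepE -MSU1_sub -le2 rS.
move: le3 le1; set r := \rank (MS (x |: S)); rewrite cU rS => le3 le1.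
rewrite leq_eqVlt in le1; case/orP: le1 => [/eqP|lt].
  move=> e; rewrite -e eqxx /=; apply/negbTE; lia.
have e : r = #|S|.+1 by apply/eqP; rewrite eqn_leq le3; exact: lt.
by rewrite e eqxx; apply/esym/eqP; lia.
Qed.

Lemma indep_sub (S T : {set U}) : col_indep col T -> S \subset T -> col_indep col S.
Proof.
move=> /eqP rT ST; rewrite col_indepE eqn_leq rank_MS /=.
have sub : (MS T <= MS S + MS (T :\: S))%MS.
  apply/MS_subP => u uT; case uS: (u \in S).
    by apply: submx_trans (addsmxSl _ _); apply: sub_MS.
  by apply: submx_trans (addsmxSr _ _); apply: sub_MS; rewrite inE uS.
have h1 := mxrankS sub.
have [h2 _] := mxrank_adds_leqif (MS S) (MS (T :\: S)).
have h3 := rank_MS (T :\: S).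
have h4 : #|T :\: S| = #|T| - #|S|.
  by rewrite cardsD (setIidPr ST).
have h5 : #|S| <= #|T| by apply: subset_leq_card.
rewrite rT in h1; lia.
Qed.

Lemma col_matroid : is_matroid [set: U] (column_matroid col).
Proof.
split.
- rewrite inE col_indepE; have := rank_MS set0; set r := \rank _; rewrite cards0 leqn0; by [].
- by move=> I _; apply: subsetT.
- by move=> I J; rewrite !inE => HJ IJ; apply: indep_sub HJ IJ.
move=> I J; rewrite !inE => HI HJ ltIJ.
case: (boolP [exists x, (x \in J :\: I) && (x |: I \in column_matroid col)]).
  by case/existsP => x /andP[]; exists x.
rewrite negb_exists => /forallP H; exfalso; move: ltIJ; apply/negP; rewrite -leqNgt.
have sub : (MS J <= MS I)%MS.
  apply/MS_subP => u uJ; case uI: (u \in I); first exact: sub_MS.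
  have := H u; rewrite !inE uI uJ /= => /negP nd.
  by apply/negPn/negP => cu; apply: nd; rewrite (indep_addP HI) ?uI //; apply/negP.
move: (mxrankS sub); move: HJ HI; rewrite !col_indepE => /eqP-> /eqP->.
by [].
Qed.
End ColMat.

End P1.
Import P1.

Module P2.

Section Mrank.
Variables (U : finType) (F : {set {set U}}).

Lemma mrank_ge (I S : {set U}) : I \in F -> I \subset S -> #|I| <= mrank F S.
Proof.
move=> IF IS; rewrite /mrank.
by apply: (@leq_bigmax_cond _ (fun J => (J \in F) && (J \subset S)) (fun J => #|J|) I); rewrite IF IS.
Qed.

Lemma mrank_wit (S : {set U}) : set0 \in F ->
  exists2 I, I \in F & (I \subset S) /\ #|I| = mrank F S.
Proof.
move=> F0; rewrite /mrank.
rewrite (@bigmax_eq_arg _ set0 (fun J => (J \in F) && (J \subset S))) ?F0 ?sub0set //.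
case: arg_maxnP; first by rewrite F0 sub0set.
by move=> I /andP[IF IS] _; exists I.
Qed.

Lemma mrank_le_card (S : {set U}) : mrank F S <= #|S|.
Proof. by apply/bigmax_leqP => I /andP[_ IS]; apply: subset_leq_card. Qed.

Lemma mrank_mono (S T : {set U}) : S \subset T -> mrank F S <= mrank F T.
Proof.
move=> ST; apply/bigmax_leqP => I /andP[IF IS]; apply: mrank_ge => //.
exact: subset_trans ST.
Qed.

Hypothesis Fdown : forall I J : {set U}, I \in F -> J \subset I -> J \in F.

Lemma mrank_U1 (S : {set U}) x : mrank F (x |: S) <= (mrank F S).+1.
Proof.
apply/bigmax_leqP => I /andP[IF IS].
have h1 : I :\ x \in F by apply: Fdown IF _; apply: subsetDl.
have h2 : I :\ x \subset S.
  apply/subsetP => u; rewrite !inE => /andP[ux uI].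
  by move/subsetP: IS => /(_ u uI); rewrite in_setU1 (negbTE ux).
have := mrank_ge h1 h2; have := cardsD1 x I; case: (x \in I) => /=; lia.
Qed.
End Mrank.

Section Part.
Variables (U : finType) (Omega : {set {set U}}).
Hypothesis partO : partition Omega [set: U].

Lemma trivO : trivIset Omega.
Proof. by case/and3P: partO. Qed.

Lemma nonemptyO w : w \in Omega -> exists x, x \in w.
Proof.
case/and3P: partO => _ _ n0 wO; case: (set_0Vmem w) => [e|[x xw]]; last by exists x.
by rewrite -e wO in n0.
Qed.

Lemma class_of (u : U) : exists2 w, w \in Omega & u \in w.
Proof.
have cu : u \in cover Omega by rewrite (cover_partition partO) inE.
by exists (pblock Omega u); [apply: pblock_mem | rewrite mem_pblock].
Qed.

Lemma class_uniq w w' u : w \in Omega -> w' \in Omega -> u \in w -> u \in w' -> w = w'.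
Proof.
move=> wO w'O uw uw'.
by rewrite -(def_pblock trivO wO uw) (def_pblock trivO w'O uw').
Qed.

Lemma card_sum (S : {set U}) : #|S| = \sum_(w in Omega) #|S :&: w|.
Proof.
rewrite -sum1_card (big_mkcond (fun u => u \in S)).
have -> : \sum_(u : U) (if u \in S then 1 else 0) =
          \sum_(u in cover Omega) (if u \in S then 1 else 0).
  by apply: eq_bigl => u; rewrite (cover_partition partO) inE.
rewrite big_trivIset ?trivO //; apply: eq_bigr => w _.
rewrite -big_mkcondr sum1_card; apply: eq_card => u; rewrite !inE andbC.
by [].
Qed.

Lemma trans_card T : transversal Omega T -> #|T| = #|Omega|.
Proof.
move=> /forallP tT; rewrite card_sum -sum1_card; apply: eq_bigr => w wO.
by have := tT w; rewrite wO => /eqP.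
Qed.

Lemma subtrans_le (S : {set U}) w : subtransversal Omega S -> w \in Omega ->
  [disjoint S & w] -> #|S| <= #|Omega|.-1.
Proof.
move=> /forallP sS wO dSw; rewrite card_sum (bigD1 w) //= (disjoint_setI0 dSw) cards0 add0n.
rewrite (cardsD1 w Omega) wO add1n /= -sum1_card.
have -> : \sum_(i in Omega :\ w) 1 = \sum_(i | (i \in Omega) && (i != w)) 1.
  by apply: eq_bigl => i; rewrite !inE andbC.
by apply: leq_sum => i /andP[iO _]; have := sS i; rewrite iO.
Qed.

Lemma subtrans_sub (S T : {set U}) : subtransversal Omega T -> S \subset T ->
  subtransversal Omega S.
Proof.
move=> /forallP sT ST; apply/forallP => w; apply/implyP => wO.
have := sT w; rewrite wO /= => h; apply: leq_trans h.
by apply: subset_leq_card; apply: setSI.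
Qed.

Lemma notin_other w w' x : w \in Omega -> w' \in Omega -> w' != w -> x \in w -> x \notin w'.
Proof.
move=> wO w'O ne xw; apply/negP => xw'; move/negP: ne; apply.
by apply/eqP; apply: class_uniq w'O wO xw' xw.
Qed.

Lemma subtrans_U1 (S : {set U}) w x : subtransversal Omega S -> w \in Omega ->
  [disjoint S & w] -> x \in w -> subtransversal Omega (x |: S).
Proof.
move=> /forallP sS wO dSw xw; apply/forallP => w'; apply/implyP => w'O.
rewrite setIUl; case: (eqVneq w' w) => [->|ne].
  rewrite (disjoint_setI0 dSw) setU0; apply: leq_trans (subset_leq_card (subsetIl _ _)) _.
  by rewrite cards1.
have -> : [set x] :&: w' = set0.
  by apply/setP => z; rewrite !inE; apply/negP => /andP[/eqP-> xw']; move/negP: (notin_other wO w'O ne xw).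
by rewrite set0U; have := sS w'; rewrite w'O.
Qed.

Lemma near_trans (S : {set U}) w w' : subtransversal Omega S -> #|S| = #|Omega|.-1 ->
  w \in Omega -> [disjoint S & w] -> w' \in Omega -> w' != w -> #|S :&: w'| = 1.
Proof.
move=> sS cS wO dSw w'O ne.
have le1 : #|S :&: w'| <= 1 by move/forallP: sS => /(_ w'); rewrite w'O.
case e : #|S :&: w'| => [|k]; last by move: le1; rewrite e; case: k {e}.
exfalso; have [x xw'] := nonemptyO w'O.
have dSw' : [disjoint S & w'] by rewrite -setI_eq0 -cards_eq0 e.
have sT := subtrans_U1 sS w'O dSw' xw'.
have xS : x \notin S by apply/negP => xS; move: (disjointFr dSw' xS); rewrite xw'.
have dTw : [disjoint x |: S & w].
  rewrite -setI_eq0 setIUl (disjoint_setI0 dSw) setU0; apply/eqP/setP => z.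
  rewrite !inE; apply/negP => /andP[/eqP-> xw].
  have ne' : w != w' by rewrite eq_sym.
  by rewrite (negbTE (notin_other w'O wO ne' xw')) in xw.
have := subtrans_le sT wO dTw; rewrite cardsU1 xS cS.
have : 0 < #|Omega| by apply/card_gt0P; exists w.
lia.
Qed.
End Part.

End P2.
Import P2.

Module P3.

Definition good (U : finType) (Omega F : {set {set U}}) : Prop :=
  [/\ set0 \in F, (forall I J : {set U}, I \in F -> J \subset I -> J \in F),
      (forall I, I \in F -> subtransversal Omega I), skew_pair_cond Omega F &
      (forall S w : {set U}, subtransversal Omega S -> #|S| = #|Omega|.-1 ->
         w \in Omega -> [disjoint S & w] ->
         exists2 x, x \in w & mrank F (x |: S) = mrank F S)].

Lemma arith3 r p q s : r <= p <= r.+1 -> r <= q <= r.+1 -> r <= s <= r.+1 ->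
  (r < p \/ r < q) -> (r < p \/ r < s) -> (r < q \/ r < s) ->
  (p = r \/ q = r \/ s = r) -> s = if p == q then p.-1 else maxn p q.
Proof.
move=> hp hq hs h1 h2 h3 h4.
have [ep|ep] : p = r \/ p = r.+1 by lia.
all: have [eq|eq] : q = r \/ q = r.+1 by lia.
all: have [es|es] : s = r \/ s = r.+1 by lia.
all: subst; rewrite ?eqxx ?maxnn ?maxnSS; try lia.
all: try (rewrite (_ : (r == r.+1) = false); last by elim: r {h1 h2 h3 h4 hp hq hs}).
all: try (rewrite (_ : (r.+1 == r) = false); last by elim: r {h1 h2 h3 h4 hp hq hs}).
all: lia.
Qed.

Section Abstract.
Variables (U : finType) (Omega : {set {set U}}).
Hypothesis partO : partition Omega [set: U].
Hypothesis card3 : forall w, w \in Omega -> #|w| = 3.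

Lemma set3 w b x y : w \in Omega -> b \in w -> x \in w -> y \in w ->
  b != x -> b != y -> x != y -> w = [set b; x; y].
Proof.
move=> wO bw xw yw bx by_ xy; apply/eqP; rewrite eq_sym eqEcard card3 //.
apply/andP; split.
  apply/subsetP => z; rewrite !inE; case/orP => [/orP[]|] /eqP-> //.
have -> : [set b; x; y] = b |: (x |: [set y]) by apply/setP => z; rewrite !inE orbA.
rewrite !cardsU1 cards1 !inE (negbTE xy) (negbTE bx) (negbTE by_) //.
Qed.

Lemma not_trans_disj (S : {set U}) : subtransversal Omega S -> ~~ transversal Omega S ->
  exists2 w, w \in Omega & [disjoint S & w].
Proof.
move=> /forallP sS; rewrite negb_forall => /existsP[w].
rewrite negb_imply => /andP[wO ne]; exists w => //.
have := sS w; rewrite wO /= => le.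
by rewrite -setI_eq0 -cards_eq0; move: ne le; case: #|_| => [|[]].
Qed.

Variable F : {set {set U}}.
Hypothesis goodF : good Omega F.

Lemma extend (S : {set U}) : S \in F ->
  exists2 T, T \in F & transversal Omega T /\ S \subset T.
Proof.
case: goodF => F0 Fdown Fsub Fskew Ftight.
have [k] := ubnP (#|U| - #|S|); elim: k S => // k IH S lt SF.
case tS: (transversal Omega S); first by exists S.
have [w wO dSw] := not_trans_disj (Fsub _ SF) (negbT tS).
have : 1 < #|w| by rewrite card3.
case/card_gt1P => x [y [xw yw xy]].
have key : forall z, z \in w -> z |: S \in F -> exists2 T, T \in F & transversal Omega T /\ S \subset T.
  move=> z zw zF.
  have zS : z \notin S by apply/negP => zS; move: (disjointFr dSw zS); rewrite zw.
  have := max_card (z |: S); rewrite cardsU1 zS => mc.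
  have lt' : #|U| - #|z |: S| < k.
    by rewrite cardsU1 zS; move: lt mc; move: (#|U|) (#|S|) => a b; lia.
  have [T TF [tT sT]] := IH (z |: S) lt' zF.
  by exists T => //; split => //; apply: subset_trans sT; apply: subsetUr.
have [] := Fskew S w x y SF (Fsub _ SF) wO dSw xw yw xy.
  exact: key.
exact: key.
Qed.

Lemma determ (S : {set U}) w b x y : subtransversal Omega S -> #|S| = #|Omega|.-1 ->
  w \in Omega -> [disjoint S & w] -> w = [set b; x; y] ->
  b != x -> b != y -> x != y ->
  mrank F (y |: S) = if mrank F (b |: S) == mrank F (x |: S)
                     then (mrank F (b |: S)).-1
                     else maxn (mrank F (b |: S)) (mrank F (x |: S)).
Proof.
case: goodF => F0 Fdown Fsub Fskew Ftight sS cS wO dSw ew bx by_ xy.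
have lo z : mrank F S <= mrank F (z |: S) by apply: mrank_mono; apply: subsetUr.
have hi z : mrank F (z |: S) <= (mrank F S).+1 by apply: mrank_U1.
have sk z1 z2 : z1 \in w -> z2 \in w -> z1 != z2 ->
    mrank F S < mrank F (z1 |: S) \/ mrank F S < mrank F (z2 |: S).
  move=> z1w z2w ne.
  have [I IF [IS cI]] := mrank_wit S F0.
  have dIw : [disjoint I & w].
    exact: disjointWl IS dSw.
  have step z : z \in w -> z |: I \in F -> mrank F S < mrank F (z |: S).
    move=> zw zF; have zI : z \notin I by apply/negP => zI; move: (disjointFr dIw zI); rewrite zw.
    by have := mrank_ge zF (setUS [set z] IS); rewrite cardsU1 zI add1n cI.
  have [h|h] := Fskew I w z1 z2 IF (Fsub _ IF) wO dIw z1w z2w ne.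
    by left; apply: step.
  by right; apply: step.
have [z zw ez] := Ftight S w sS cS wO dSw.
have bw : b \in w by rewrite ew !inE eqxx.
have xw : x \in w by rewrite ew !inE eqxx orbT.
have yw : y \in w by rewrite ew !inE eqxx !orbT.
have h1 := sk _ _ bw xw bx; have h2 := sk _ _ bw yw by_; have h3 := sk _ _ xw yw xy.
have hb : mrank F S <= mrank F (b |: S) <= (mrank F S).+1 by rewrite lo hi.
have hx : mrank F S <= mrank F (x |: S) <= (mrank F S).+1 by rewrite lo hi.
have hy : mrank F S <= mrank F (y |: S) <= (mrank F S).+1 by rewrite lo hi.
apply: (arith3 hb hx hy h1 h2 h3).
move: zw; rewrite ew !inE => /orP[/orP[]|] /eqP ez'; rewrite ez' in ez; tauto.
Qed.
End Abstract.

Section Agree.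
Variables (U : finType) (Omega : {set {set U}}).
Hypothesis partO : partition Omega [set: U].
Hypothesis card3 : forall w, w \in Omega -> #|w| = 3.
Variables (F G : {set {set U}}) (X2 : {set U}).
Hypothesis goodF : good Omega F.
Hypothesis goodG : good Omega G.
Hypothesis X2w : forall w, w \in Omega -> 1 < #|w :&: X2|.
Hypothesis agreeX : forall I : {set U}, I \subset X2 -> (I \in F) = (I \in G).

Lemma agree_trans (T : {set U}) : transversal Omega T -> mrank F T = mrank G T.
Proof.
have [k] := ubnP #|T :\: X2|; elim: k T => // k IH T lt tT.
case sub: (T \subset X2).
  rewrite /mrank; apply: eq_bigl => I; case IT: (I \subset T); rewrite ?andbT ?andbF //.
  by rewrite agreeX //; apply: subset_trans sub.
have [u] : exists u, u \in T :\: X2.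
  by move/negbT: sub => /subsetPn[u uT uX]; exists u; rewrite inE uX.
rewrite inE => /andP[uX uT].
have [w wO uw] := class_of partO u.
have := X2w wO; case/card_gt1P => b [x [bw' xw' bx]].
move: bw' xw'; rewrite !inE => /andP[bw bX] /andP[xw xX].
have bu : b != u by apply/eqP => e; move: bX; rewrite e (negbTE uX).
have xu : x != u by apply/eqP => e; move: xX; rewrite e (negbTE uX).
have ew := set3 card3 wO bw xw uw bx bu xu.
set S := T :\ u.
have sS : subtransversal Omega S.
  by apply: (subtrans_sub (T := T)); [apply/forallP => w'; apply/implyP => w'O; move/forallP: tT => /(_ w'); rewrite w'O => /eqP -> | apply: subsetDl].
have cS : #|S| = #|Omega|.-1.
  by rewrite -(trans_card partO tT) (cardsD1 u T) uT.
have Tw : T :&: w = [set u].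
  move/forallP: tT => /(_ w); rewrite wO /= => /cards1P[z ez].
  have : u \in T :&: w by rewrite inE uT uw.
  by rewrite ez inE => /eqP e; rewrite e.
have dSw : [disjoint S & w].
  rewrite -setI_eq0; apply/eqP/setP => z; rewrite !inE.
  apply/negbTE; apply/negP => /andP[/andP[zu zT] zw].
  have : z \in T :&: w by rewrite inE zT zw.
  by rewrite Tw inE (negbTE zu).
have eT : T = u |: S by rewrite setD1K.
have tswap z : z \in w -> z \in X2 -> transversal Omega (z |: S) /\ #|(z |: S) :\: X2| < k.
  move=> zw zX; split.
    apply/forallP => w'; apply/implyP => w'O.
    case: (eqVneq w' w) => [->|ne].
      rewrite setIUl (disjoint_setI0 dSw) setU0.
      by rewrite (setIidPl _) ?cards1 // sub1set.
    have zw' : z \notin w' by apply: (notin_other partO wO w'O ne zw).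
    have uw' : u \notin w' by apply: (notin_other partO wO w'O ne uw).
    have -> : (z |: S) :&: w' = T :&: w'.
      apply/setP => y; rewrite !inE; case: (eqVneq y z) => [->|]; first by rewrite (negbTE zw') !andbF.
      case: (eqVneq y u) => [->|] /=; first by rewrite (negbTE uw') !andbF.
      by [].
    by move/forallP: tT => /(_ w'); rewrite w'O.
  apply: (@leq_trans #|T :\: X2|); last by rewrite -ltnS. apply: proper_card; rewrite properEneq; apply/andP; split.
    apply/negP => /eqP e; have : u \in T :\: X2 by rewrite inE uX uT.
    rewrite -e !inE => /andP[_ /orP[/eqP uz|]]; first by move: zX; rewrite -uz (negbTE uX).
    by rewrite eqxx.
  apply/subsetP => y; rewrite !inE => /andP[yX /orP[/eqP e|/andP[_ yT]]]; first by move: yX; rewrite e zX.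
  by rewrite yX yT.
have [tb lb] := tswap b bw bX; have [tx lx] := tswap x xw xX.
rewrite eT (determ goodF sS cS wO dSw ew bx bu xu).
rewrite (determ goodG sS cS wO dSw ew bx bu xu).
by rewrite (IH _ lb tb) (IH _ lx tx).
Qed.

Lemma agree_sub (I : {set U}) : I \in F -> I \in G.
Proof.
move=> IF; have [T TF [tT IT]] := extend partO card3 goodF IF.
case: goodG => G0 Gdown _ _ _.
apply: Gdown _ IT.
have eF : mrank F T = #|T|.
  by apply/eqP; rewrite eqn_leq mrank_le_card mrank_ge.
have [J JG [JT cJ]] := @mrank_wit _ G T G0.
rewrite -agree_trans // eF in cJ.
have -> : T = J by apply/eqP; rewrite eq_sym eqEcard JT cJ leqnn.
by [].
Qed.
End Agree.

End P3.
Import P3.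

Module P4.
Import GRing.Theory.

Lemma F2_cases (x : 'F_2) : x = 0%R \/ x = 1%R.
Proof. by case: x => [[|[|k]]] //= i; [left|right]; apply/val_inj. Qed.
Lemma F2_add_self (x : 'F_2) : (x + x = 0)%R.
Proof. by case: (F2_cases x) => ->; [rewrite addr0|apply/val_inj]. Qed.
Lemma F2_10 : (1%R : 'F_2) != 0%R. Proof. by []. Qed.
Lemma F2_opp (x : 'F_2) : (- x = x)%R.
Proof. by apply/eqP; rewrite eq_sym -subr_eq0 opprK F2_add_self. Qed.
Lemma F2_neq0 (x : 'F_2) : x != 0%R -> x = 1%R.
Proof. by case: (F2_cases x) => -> //; rewrite eqxx. Qed.

Local Open Scope ring_scope.

Lemma F2_add_self_mx m n (M : 'M['F_2]_(m, n)) : M + M = 0.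
Proof. by apply/matrixP => i j; rewrite !mxE F2_add_self. Qed.

Lemma dualz n k (X : 'M['F_2]_(k, n)) (r : 'rV['F_2]_n) : ~~ (r <= X)%MS ->
  exists z : 'cV_n, X *m z = 0 /\ (r *m z) 0 0 = 1.
Proof.
rewrite submxE => /eqP ne.
have [j nej] : exists j, (r *m cokermx X) 0 j != 0.
  case: (boolP [exists j, (r *m cokermx X) 0 j != 0]) => [/existsP[j Hj]|]; first by exists j.
  rewrite negb_exists => /forallP H; exfalso; apply: ne.
  by apply/rowP => j; rewrite [RHS]mxE; apply/eqP; exact: negbNE (H j).
exists (cokermx X *m delta_mx j 0); split; first by rewrite mulmxA mulmx_coker mul0mx.
rewrite mulmxA; set M := r *m cokermx X.
rewrite [LHS]mxE (bigD1 j) //= big1 ?addr0.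
  by rewrite [delta_mx _ _ _ _]mxE !eqxx mulr1; apply: F2_neq0.
by move=> i ne'; rewrite [delta_mx _ _ _ _]mxE (negbTE ne') mulr0.
Qed.

Lemma sub_col_mx_F2 n k (L : 'M['F_2]_(k, n)) (r1 r2 : 'rV['F_2]_n) :
  (r1 <= col_mx L r2)%MS -> (r1 <= L)%MS \/ ((r1 + r2)%R <= L)%MS.
Proof.
case/submxP => D ->; rewrite -[D]hsubmxK mul_row_col.
rewrite [rsubmx D]mx11_scalar mul_scalar_mx.
case: (F2_cases (rsubmx D 0 0)) => ->; first by left; rewrite scale0r addr0 submxMl.
by right; rewrite scale1r -addrA F2_add_self_mx addr0 submxMl.
Qed.

Lemma isotropy n (A : 'I_n -> 'I_n -> 'F_2) (symA : forall i j, A i j = A j i)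
  (Q Q' : 'I_n -> 'F_2) :
  \sum_k ((\sum_k' A k k' * Q k') * Q' k + Q k * (\sum_k' A k k' * Q' k')) = 0.
Proof.
rewrite big_split /=.
have -> : \sum_k (\sum_k' A k k' * Q k') * Q' k = \sum_k Q k * (\sum_k' A k k' * Q' k').
  rewrite (eq_bigr (fun k => \sum_k' A k k' * Q k' * Q' k)); last by move=> k _; rewrite mulr_suml.
  rewrite exchange_big /=; apply: eq_bigr => k _; rewrite mulr_sumr; apply: eq_bigr => k' _.
  by rewrite symA -mulrA mulrCA.
exact: F2_add_self.
Qed.

End P4.
Import P4.

Module P5.
Import GRing.Theory.

Section MrankCol.
Variables (U : finType) (m : nat) (col : U -> 'rV['F_2]_m) (Omega : {set {set U}}).
Let F := sheltered_ind (column_matroid col) Omega.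

Lemma inF (I : {set U}) : (I \in F) = col_indep col I && subtransversal Omega I.
Proof. by rewrite /F /sheltered_ind !inE. Qed.

Lemma F0 : set0 \in F.
Proof.
rewrite inF; case: (col_matroid col) => h _ _ _; move: h; rewrite inE => ->.
by apply/forallP => w; apply/implyP => _; rewrite set0I cards0.
Qed.

Lemma Fdown (I J : {set U}) : I \in F -> J \subset I -> J \in F.
Proof.
rewrite !inF => /andP[iI sI] JI; rewrite (indep_sub iI JI).
exact: subtrans_sub sI JI.
Qed.

Lemma mrank_span (S : {set U}) x : subtransversal Omega S ->
  (col x <= MS col S)%MS -> mrank F (x |: S) = mrank F S.
Proof.
move=> sS cx; apply/eqP; rewrite eqn_leq (mrank_mono _ (subsetUr _ _)) andbT.
have [I IF [IS cI]] := @mrank_wit _ F S F0.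
have IS' : forall u, u \in S -> (col u <= MS col I)%MS.
  move=> u uS; case uI: (u \in I); first exact: sub_MS.
  move: IF; rewrite inF => /andP[iI sI].
  apply/negPn/negP => nu.
  have : u |: I \in F.
    rewrite inF (indep_addP iI) ?uI //= nu /=.
    by apply: subtrans_sub sS _; rewrite subUset sub1set uS IS.
  move/mrank_ge => /(_ S); rewrite subUset sub1set uS IS => /(_ isT).
  by rewrite cardsU1 uI cI ltnn.
have cxI : (col x <= MS col I)%MS.
  by apply: submx_trans cx _; apply/MS_subP.
rewrite -cI; apply/bigmax_leqP => J /andP[JF JS].
move: JF; rewrite inF => /andP[/eqP rJ _].
have sub : (MS col J <= MS col I)%MS.
  apply/MS_subP => u uJ; move/subsetP: JS => /(_ u uJ); rewrite in_setU1.
  by case/orP => [/eqP->|/IS'].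
move: (mxrankS sub); rewrite rJ; move: IF; rewrite inF => /andP[/eqP-> _].
by [].
Qed.

Lemma mrank_span_conv (S : {set U}) x : S \in F -> x \notin S ->
  subtransversal Omega (x |: S) -> mrank F (x |: S) = mrank F S ->
  (col x <= MS col S)%MS.
Proof.
move=> SF xS sxS e; apply/negPn/negP => nx.
have : x |: S \in F.
  by move: SF; rewrite !inF => /andP[iS _]; rewrite (indep_addP iS) // nx.
move/mrank_ge => /(_ (x |: S) (subxx _)); rewrite e cardsU1 xS.
by move/leq_trans => /(_ _ (mrank_le_card F S)); rewrite ltnn.
Qed.
End MrankCol.

End P5.
Import P5.

Module P6.
Import GRing.Theory.
Local Open Scope ring_scope.

Definition al (i : 'I_3) : 'F_2 := if val i == 1%N then 0 else 1.
Definition be (i : 'I_3) : 'F_2 := if val i == 0%N then 0 else 1.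

Lemma case3 (p q p' q' : 'F_2) (i : 'I_3) :
  al i * p + be i * q = 0 -> al i * p' + be i * q' = 0 -> q * p' + p * q' = 0.
Proof.
case: i => [[|[|[|k]]] Hi] //; rewrite /al /be /=.
- rewrite !mul1r !mul0r !addr0 => -> ->; by rewrite mulr0 mul0r addr0.
- rewrite !mul1r !mul0r !add0r => -> ->; by rewrite mulr0 mul0r addr0.
rewrite !mul1r => /eqP; rewrite addr_eq0 F2_opp => /eqP ->.
move=> /eqP; rewrite addr_eq0 F2_opp => /eqP ->.
by rewrite mulrC F2_add_self.
Qed.

Lemma lin2 (X Y : 'M['F_2]_(1,1)) a b : (a *: X + b *: Y) 0 0 = a * X 0 0 + b * Y 0 0.
Proof. by rewrite !mxE. Qed.

Section DWorld.
Variables (U : finType) (Omega : {set {set U}}) (V : finType) (A : V -> V -> 'F_2)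
  (lab : V -> 'I_3 -> U) (g : U -> V * 'I_3) (col : U -> 'rV['F_2]_#|V|).
Hypothesis symA : forall x y, A x y = A y x.
Hypothesis labK : forall v i, g (lab v i) = (v, i).
Hypothesis gK : forall u, lab (g u).1 (g u).2 = u.
Hypothesis eO : Omega = [set [set lab v i | i : 'I_3] | v : V].
Hypothesis partO : partition Omega [set: U].
Hypothesis col0 : forall v, col (lab v (@Ordinal 3 0 isT)) = unit_col v.
Hypothesis col1 : forall v, col (lab v (@Ordinal 3 1 isT)) = A_col A v.
Hypothesis col2 : forall v, col (lab v (@Ordinal 3 2 isT)) = (A_col A v + unit_col v)%R.

Definition cls u := (g u).1.
Definition ix u := (g u).2.
Definition Wv v := [set lab v i | i : 'I_3].

Lemma col_lab v i : col (lab v i) = al i *: unit_col v + be i *: A_col A v.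
Proof.
case: i => [[|[|[|k]]] Hi] //; rewrite (bool_irrelevance Hi isT) /al /be /=.
- by rewrite col0 scale1r scale0r addr0.
- by rewrite col1 scale1r scale0r add0r.
by rewrite col2 !scale1r addrC.
Qed.

Lemma col_all u : col u = al (ix u) *: unit_col (cls u) + be (ix u) *: A_col A (cls u).
Proof. by rewrite -{1}(gK u) col_lab. Qed.

Lemma in_Wv u v : (u \in Wv v) = (cls u == v).
Proof.
apply/imsetP/eqP => [[i _ ->]|<-]; first by rewrite /cls labK.
by exists (ix u) => //; rewrite /cls /ix gK.
Qed.

Lemma Wv_O v : Wv v \in Omega.
Proof. by rewrite eO; apply: imset_f. Qed.

Lemma O_Wv w : w \in Omega -> exists v, w = Wv v.
Proof. by rewrite eO => /imsetP[v _ ->]; exists v. Qed.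

Lemma lab_in v i : lab v i \in Wv v.
Proof. by rewrite in_Wv /cls labK. Qed.

Lemma Wv_inj : injective Wv.
Proof.
move=> u v e; have := lab_in u ord0; rewrite e in_Wv /cls labK => /eqP.
by [].
Qed.

Lemma mul_unit v (z : 'cV['F_2]_#|V|) : (unit_col v *m z) 0 0 = z (enum_rank v) 0.
Proof.
rewrite mxE (bigD1 (enum_rank v)) //= big1 => [|k ne].
  by rewrite !mxE enum_rankK eqxx mul1r addr0.
rewrite !mxE; case: eqP => [e|]; last by rewrite mul0r.
by move: ne; rewrite -e enum_valK eqxx.
Qed.

Definition Az (z : 'cV['F_2]_#|V|) (k : 'I_#|V|) := \sum_(k' < #|V|) A (enum_val k) (enum_val k') * z k' 0.

Lemma mul_Acol v (z : 'cV['F_2]_#|V|) : (A_col A v *m z) 0 0 = Az z (enum_rank v).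
Proof. by rewrite mxE /Az; apply: eq_bigr => k _; rewrite !mxE enum_rankK symA. Qed.

Lemma mul_col u (z : 'cV['F_2]_#|V|) : (col u *m z) 0 0 =
  al (ix u) * z (enum_rank (cls u)) 0 + be (ix u) * Az z (enum_rank (cls u)).
Proof. by rewrite col_all mulmxDl -!scalemxAl lin2 mul_unit mul_Acol. Qed.

Lemma MS_mul0 (S : {set U}) (z : 'cV['F_2]_#|V|) : MS col S *m z = 0 ->
  forall s, s \in S -> (col s *m z) 0 0 = 0.
Proof.
move=> H s sS; have := congr1 (fun M => row (enum_rank_in sS s) M) H.
by rewrite row_mul row_MS enum_rankK_in // => ->; rewrite row0 mxE.
Qed.

Lemma tightD (S : {set U}) w : subtransversal Omega S -> #|S| = #|Omega|.-1 ->
  w \in Omega -> [disjoint S & w] -> exists2 x, x \in w & (col x <= MS col S)%MS.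
Proof.
move=> sS cS wO dSw; have [v ew] := O_Wv wO; subst w.
case: (boolP [exists i : 'I_3, (col (lab v i) <= MS col S)%MS]) => [/existsP[i Hi]|/existsPn H].
  by exists (lab v i) => //; apply: lab_in.
exfalso.
set L := MS col S.
have nE : ~~ (unit_col v <= L)%MS by rewrite -col0; apply: H.
have nK : ~~ (A_col A v <= L)%MS by rewrite -col1; apply: H.
have nEK : ~~ ((A_col A v + unit_col v)%R <= L)%MS by rewrite -col2; apply: H.
have n1 : ~~ (unit_col v <= col_mx L (A_col A v))%MS.
  apply/negP => /sub_col_mx_F2 [h|h]; first by rewrite h in nE.
  by rewrite addrC h in nEK.
have n2 : ~~ (A_col A v <= col_mx L (unit_col v))%MS.
  apply/negP => /sub_col_mx_F2 [h|h]; first by rewrite h in nK.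
  by rewrite h in nEK.
have [z [hz1 hz2]] := dualz n1.
have [z' [hz1' hz2']] := dualz n2.
move: hz1 hz1'; rewrite !mul_col_mx => /eqP; rewrite col_mx_eq0 => /andP[/eqP Lz /eqP Kz].
move=> /eqP; rewrite col_mx_eq0 => /andP[/eqP Lz' /eqP Ez'].
have iso := isotropy (A := fun k k' => A (enum_val k) (enum_val k')) (fun k k' => symA _ _)
   (fun k => z k 0) (fun k => z' k 0).
move: iso; rewrite (bigD1 (enum_rank v)) //= [X in _ + X = 0]big1.
  have e1 : Az z (enum_rank v) = 0 by rewrite -mul_Acol Kz mxE.
  have e2 : z' (enum_rank v) 0 = 0 by rewrite -mul_unit Ez' mxE.
  have e3 : z (enum_rank v) 0 = 1 by rewrite -mul_unit.
  have e4 : Az z' (enum_rank v) = 1 by rewrite -mul_Acol.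
  rewrite -/(Az z (enum_rank v)) -/(Az z' (enum_rank v)) e1 e2 e3 e4.
  by rewrite mul0r mul1r add0r addr0 => /eqP; rewrite (negbTE F2_10).
move=> k nk.
have nv : enum_val k != v by apply: contra nk => /eqP <-; rewrite enum_valK.
have ne : Wv (enum_val k) != Wv v by apply: contra nv => /eqP /Wv_inj ->.
have := near_trans partO sS cS wO dSw (Wv_O (enum_val k)) ne.
move/eqP/cards1P => [s es].
have : s \in S :&: Wv (enum_val k) by rewrite es inE.
rewrite inE in_Wv => /andP[sS' /eqP cs].
have h1 := MS_mul0 Lz sS'; have h1' := MS_mul0 Lz' sS'.
rewrite !mul_col cs enum_valK in h1 h1'.
rewrite -/(Az z k) -/(Az z' k).
exact: case3 h1 h1'.
Qed.

Lemma subtrans_eq (I : {set U}) s s' c : subtransversal Omega I -> s \in I -> s' \in I ->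
  cls s = c -> cls s' = c -> s = s'.
Proof.
move=> /forallP /(_ (Wv c)); rewrite Wv_O /= => /card_le1_eqP H sI s'I cs cs'.
by apply: H; rewrite inE ?sI ?s'I in_Wv ?cs ?cs' eqxx.
Qed.

Lemma inner (c : V) (f : 'I_#|V| -> 'F_2) :
  \sum_(k' < #|V|) f k' * (c == enum_val k')%:R = f (enum_rank c).
Proof.
rewrite (bigD1 (enum_rank c)) //= enum_rankK eqxx mulr1 big1 ?addr0 // => k' ne.
case: eqP => [e|]; last by rewrite mulr0.
by move: ne; rewrite e enum_valK eqxx.
Qed.

Lemma pair_term (a b p q p' q' : 'F_2) (c c' : bool) : (c -> c' -> (p = p' /\ q = q')) ->
  a * p * c%:R * (b * q' * c'%:R) + a * q * c%:R * (b * p' * c'%:R) = 0.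
Proof.
case: c; last by rewrite !mulr0 !mul0r addr0.
case: c'; last by rewrite !mulr0 addr0.
case=> // -> ->.
have -> : a * p' * 1%:R * (b * q' * 1%:R) = a * q' * 1%:R * (b * p' * 1%:R) by ring.
exact: F2_add_self.
Qed.

Section Primal.
Variable I : {set U}.
Definition Pc (D : 'rV['F_2]_#|I|) (k : 'I_#|V|) :=
  \sum_(i < #|I|) D 0 i * al (ix (enum_val i)) * (cls (enum_val i) == enum_val k)%:R.
Definition Qc (D : 'rV['F_2]_#|I|) (k : 'I_#|V|) :=
  \sum_(i < #|I|) D 0 i * be (ix (enum_val i)) * (cls (enum_val i) == enum_val k)%:R.
Definition AQ (f : 'I_#|V| -> 'F_2) (k : 'I_#|V|) :=
  \sum_(k' < #|V|) A (enum_val k) (enum_val k') * f k'.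

Lemma expand (D : 'rV['F_2]_#|I|) k : (D *m MS col I) 0 k = Pc D k + AQ (Qc D) k.
Proof.
rewrite mxE /AQ /Qc.
have -> : \sum_(k' < #|V|) A (enum_val k) (enum_val k') *
      (\sum_(i < #|I|) D 0 i * be (ix (enum_val i)) * (cls (enum_val i) == enum_val k')%:R)
   = \sum_(i < #|I|) D 0 i * be (ix (enum_val i)) * A (enum_val k) (cls (enum_val i)).
  rewrite (eq_bigr (fun k' => \sum_(i < #|I|) A (enum_val k) (enum_val k') *
      (D 0 i * be (ix (enum_val i)) * (cls (enum_val i) == enum_val k')%:R))); last first.
    by move=> k' _; rewrite mulr_sumr.
  rewrite exchange_big /=; apply: eq_bigr => i _.
  rewrite (eq_bigr (fun k' => (D 0 i * be (ix (enum_val i)) * A (enum_val k) (enum_val k')) *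
      (cls (enum_val i) == enum_val k')%:R)); last by move=> k' _; ring.
  by rewrite inner enum_rankK.
rewrite /Pc -big_split /=; apply: eq_bigr => i _.
rewrite !mxE col_all !mxE eq_sym; ring.
Qed.

Lemma Pc_v (D : 'rV['F_2]_#|I|) v : [disjoint I & Wv v] -> Pc D (enum_rank v) = 0 /\ Qc D (enum_rank v) = 0.
Proof.
move=> dI; have h : forall i : 'I_#|I|, (cls (enum_val i) == enum_val (enum_rank v)) = false.
  move=> i; rewrite enum_rankK; apply/negbTE; apply/negP => /eqP e.
  have : enum_val i \in Wv v by rewrite in_Wv e.
  by rewrite (disjointFr dI (enum_valP i)).
by split; apply: big1 => i _; rewrite h mulr0.
Qed.

Lemma pairs (D D' : 'rV['F_2]_#|I|) k : subtransversal Omega I ->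
  Pc D k * Qc D' k + Qc D k * Pc D' k = 0.
Proof.
move=> sI; rewrite /Pc /Qc !big_distrlr -big_split /=; apply: big1 => i _.
rewrite -big_split /=; apply: big1 => i' _.
apply: pair_term => /eqP ei /eqP ei'.
have ee : enum_val i = enum_val i' by apply: subtrans_eq sI (enum_valP i) (enum_valP i') ei ei'.
by have -> : i' = i by apply: enum_val_inj.
Qed.
End Primal.

Lemma two_of_three n (L : 'M['F_2]_(n, #|V|)) (E K : 'rV['F_2]_#|V|) (i j : 'I_3) : i != j ->
  ((al i *: E + be i *: K)%R <= L)%MS -> ((al j *: E + be j *: K)%R <= L)%MS ->
  (E <= L)%MS /\ (K <= L)%MS.
Proof.
have KE : K = (E + K) + E by rewrite addrAC F2_add_self_mx add0r.
have EK : E = (E + K) + K by rewrite -addrA F2_add_self_mx addr0.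
case: i => [[|[|[|?]]] ?] //; case: j => [[|[|[|?]]] ?] //; rewrite /al /be /= => _;
  rewrite ?scale1r ?scale0r ?addr0 ?add0r => h1 h2.
- by split.
- by split => //; rewrite KE addmx_sub.
- by split.
- by split => //; rewrite EK addmx_sub.
- by split => //; rewrite KE addmx_sub.
- by split => //; rewrite EK addmx_sub.
Qed.

Lemma shelterD : skew_pair_cond Omega (column_matroid col).
Proof.
move=> I w x y; rewrite inE => iI sI wO dIw xw yw xy.
have [v ew] := O_Wv wO; subst w.
have xI : x \notin I by apply/negP => h; move: (disjointFr dIw h); rewrite xw.
have yI : y \notin I by apply/negP => h; move: (disjointFr dIw h); rewrite yw.
rewrite !inE !(indep_addP iI) //.
case: (boolP (col x <= MS col I)%MS) => hx; last by left.
case: (boolP (col y <= MS col I)%MS) => hy; last by right.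
exfalso.
move: xw yw; rewrite !in_Wv => /eqP cx /eqP cy.
have ij : ix x != ix y.
  apply: contra xy => /eqP e; apply/eqP.
  by rewrite -(gK x) -(gK y); congr lab; rewrite -/(cls x) -/(cls y) ?cx ?cy.
rewrite -(gK x) -(gK y) !col_lab -/(cls x) -/(cls y) -/(ix x) -/(ix y) cx cy in hx hy.
have [hE hK] := two_of_three ij hx hy.
case/submxP: hE => D hD; case/submxP: hK => D' hD'.
set delta := fun k : 'I_#|V| => ((v == enum_val k)%:R : 'F_2).
have eE : forall k, delta k = Pc D k + AQ (Qc D) k.
  by move=> k; rewrite -expand -hD mxE eq_sym.
have eK : forall k, A (enum_val k) v = Pc D' k + AQ (Qc D') k.
  by move=> k; rewrite -expand -hD' mxE.
have iso := isotropy (A := fun k k' => A (enum_val k) (enum_val k')) (fun k k' => symA _ _)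
   (Qc D) (fun k => Qc D' k + delta k).
have e1 : forall k, AQ (Qc D) k = delta k + Pc D k.
  by move=> k; rewrite eE addrC addrA F2_add_self add0r.
have e2 : forall k, \sum_k' A (enum_val k) (enum_val k') * (Qc D' k' + delta k') = Pc D' k.
  move=> k; rewrite (eq_bigr (fun k' => A (enum_val k) (enum_val k') * Qc D' k' +
     A (enum_val k) (enum_val k') * delta k')); last by move=> k' _; rewrite mulrDr.
  rewrite big_split /= -/(AQ (Qc D') k) /delta inner enum_rankK eK.
  by rewrite addrCA F2_add_self addr0.
move: iso; rewrite (eq_bigr (fun k => (delta k + Pc D k) * (Qc D' k + delta k) + Qc D k * Pc D' k)); last first.
  by move=> k _; rewrite -e2 -/(AQ (Qc D) k) e1.
rewrite (bigD1 (enum_rank v)) //= [X in _ + X = 0]big1.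
  have [p0 q0] := Pc_v D dIw; have [p0' q0'] := Pc_v D' dIw.
  rewrite p0 q0 p0' q0' /delta enum_rankK eqxx.
  by rewrite addr0 add0r mulr1 mul0r !addr0 => /eqP; rewrite (negbTE F2_10).
move=> k nk.
have d0 : delta k = 0.
  rewrite /delta; case: eqP => // e; by move: nk; rewrite e enum_valK eqxx.
rewrite d0 add0r addr0; exact: pairs.
Qed.

Lemma rankD : (matroid_rank (column_matroid col) <= #|Omega|)%N.
Proof.
apply/bigmax_leqP => I; rewrite inE => /eqP <-.
apply: leq_trans (rank_leq_col _) _.
by rewrite eO card_imset //; apply: Wv_inj.
Qed.

End DWorld.

End P6.
Import P6.

Module P7.
Import GRing.Theory.
Local Open Scope ring_scope.

Lemma unit_delta (V : finType) (v : V) : unit_col v = delta_mx (ord0 : 'I_1) (enum_rank v).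
Proof.
apply/rowP => j; rewrite !mxE eqxx /=.
suff -> : (enum_val j == v) = (j == enum_rank v) by [].
by apply/eqP/eqP => [<-|->]; [rewrite enum_valK|rewrite enum_rankK].
Qed.

Section Supp.
Variables (U V : finType) (col : U -> 'rV['F_2]_#|V|).

Lemma supp_sub (S : {set U}) (W : pred V) (r : 'rV['F_2]_#|V|) :
  (forall v, W v -> (unit_col v <= MS col S)%MS) ->
  (forall k, ~~ W (enum_val k) -> r 0 k = 0%R) -> (r <= MS col S)%MS.
Proof.
move=> h1 h2; rewrite (row_sum_delta r); apply: summx_sub => k _.
case Wk: (W (enum_val k)).
  by apply: scalemx_sub; rewrite -(enum_valK k) -unit_delta; apply: h1.
by rewrite h2 ?Wk // scale0r sub0mx.
Qed.

Lemma sub_supp (S : {set U}) (P : pred V) (r : 'rV['F_2]_#|V|) :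
  (forall s, s \in S -> exists2 v, col s = unit_col v & P v) ->
  (r <= MS col S)%MS -> forall k, ~~ P (enum_val k) -> r 0 k = 0%R.
Proof.
move=> h /submxP[D ->] k nP; rewrite mxE; apply: big1 => i _; rewrite mxE.
have [v cv Pv] := h _ (enum_valP i); rewrite cv mxE.
case: eqP => [e|_]; last by rewrite GRing.mulr0.
by move: nP; rewrite e Pv.
Qed.
End Supp.

End P7.
Import P7.

Module P8.
Import GRing.Theory.
Local Open Scope ring_scope.

Lemma ord3_cases (i : 'I_3) : [\/ i = @Ordinal 3 0 isT, i = @Ordinal 3 1 isT | i = @Ordinal 3 2 isT].
Proof.
case: i => [[|[|[|k]]] Hi]; [apply: Or31|apply: Or32|apply: Or33|by []]; by apply: val_inj.
Qed.

Lemma from1 (U : finType) (Omega Ind : {set {set U}}) :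
  partition Omega [set: U] -> (forall w, w \in Omega -> #|w| = 3%N) ->
  tight Omega Ind -> binary_mm Omega Ind -> IAAI_sheltered Omega Ind.
Proof.
move=> partO c3 [_ tightI] [M [[Mmat _ Mskew] [m [c eM]] eInd]].
set F := sheltered_ind (column_matroid c) Omega.
have eIF : Ind = F by rewrite eInd eM.
rewrite eIF in tightI *.
have goodF : good Omega F.
  split.
  - exact: F0.
  - exact: Fdown.
  - by move=> I; rewrite inF => /andP[].
  - move=> I w x y IF sI wO dIw xw yw xy.
    have IM : I \in M by rewrite eM inE; move: IF; rewrite inF => /andP[].
    have sx := subtrans_U1 partO sI wO dIw xw; have sy := subtrans_U1 partO sI wO dIw yw.
    case: (Mskew I w x y IM sI wO dIw xw yw xy) => h; [left|right]; rewrite inF;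
      rewrite eM inE in h; by rewrite h ?sx ?sy.
  - exact: tightI.
have [B BF [tB _]] := extend partO c3 goodF (F0 c Omega).
have cB : #|B| = #|Omega| := trans_card partO tB.

have iB : col_indep c B by move: BF; rewrite inF => /andP[].
have sB : subtransversal Omega B by move: BF; rewrite inF => /andP[].
pose V : finType := {u : U | u \in B}.
have cV : #|V| = #|Omega|.
  by rewrite card_sig -cB; apply: eq_card => u; rewrite inE.
pose wv (v : V) := pblock Omega (val v).
have cov : cover Omega = [set: U] by apply: cover_partition.
have wvO v : wv v \in Omega by apply: pblock_mem; rewrite cov inE.
have bw v : val v \in wv v by rewrite /wv mem_pblock cov inE.
have Buniq : forall w u u', w \in Omega -> u \in B -> u' \in B -> u \in w -> u' \in w -> u = u'.
  move=> w u u' wO uB u'B uw u'w.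
  move/forallP: tB => /(_ w); rewrite wO /= => /cards1P[z ez].
  have : u \in B :&: w by rewrite inE uB uw.
  have : u' \in B :&: w by rewrite inE u'B u'w.
  by rewrite ez !inE => /eqP -> /eqP ->.
have Bw : forall v u, u \in B -> u \in wv v -> u = val v.
  by move=> v u uB uw; apply: Buniq (wvO v) uB (valP v) uw (bw v).
pose Sv (v : V) := B :\ val v.
have sSv v : subtransversal Omega (Sv v) by apply: subtrans_sub sB _; apply: subsetDl.
have cSv v : #|Sv v| = #|Omega|.-1 by rewrite -cB (cardsD1 (val v) B) (valP v).
have dSv v : [disjoint Sv v & wv v].
  rewrite -setI_eq0; apply/eqP/setP => u; rewrite !inE.
  apply/negbTE/negP => /andP[/andP[uv uB] uw].
  by move: uv; rewrite (Bw v u uB uw) eqxx.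
have SvF v : Sv v \in F by apply: (Fdown BF); apply: subsetDl.
have xex v : exists x, (x \in wv v) && (mrank F (x |: Sv v) == mrank F (Sv v)).
  have [x xw ex] := tightI (Sv v) (wv v) (sSv v) (cSv v) (wvO v) (dSv v).
  by exists x; rewrite xw ex eqxx.
pose xf v := xchoose (xex v).
have xfw v : xf v \in wv v by case/andP: (xchooseP (xex v)).
have xfr v : mrank F (xf v |: Sv v) = mrank F (Sv v) by case/andP: (xchooseP (xex v)) => _ /eqP.
have xb v : xf v != val v.
  apply/eqP => e; have := xfr v; rewrite e setD1K ?(valP v) //.
  have h1 : mrank F B = #|B| by apply/eqP; rewrite eqn_leq mrank_le_card mrank_ge.
  have h2 := mrank_le_card F (Sv v); rewrite cSv -cB in h2.
  rewrite h1 => e2; rewrite -e2 in h2.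
  have : (0 < #|B|)%N by apply/card_gt0P; exists (val v); apply: valP.
  move: h2; case: #|B| => // n; rewrite ltnn //.
have xfB v : xf v \notin B.
  by apply/negP => xB; move: (xb v); rewrite (Bw v _ xB (xfw v)) eqxx.
have yex v : exists y, [&& y \in wv v, y != val v & y != xf v].
  case: (set_0Vmem (wv v :\ val v :\ xf v)) => [e|[y]]; last first.
    by rewrite !inE => /and3P[yx yv yw]; exists y; rewrite yw yv yx.
  exfalso; have : wv v \subset [set val v; xf v].
    apply/subsetP => u uw; rewrite !inE; apply/negPn/negP; rewrite negb_or => /andP[uv ux].
    have : u \in wv v :\ val v :\ xf v by rewrite !inE uv ux uw.
    by rewrite e inE.
  move/subset_leq_card; rewrite c3 // cards2; case: (_ != _) => //.
pose yf v := xchoose (yex v).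
have yfP v : [&& yf v \in wv v, yf v != val v & yf v != xf v] := xchooseP (yex v).

pose lab (v : V) (i : 'I_3) := if val i == 0%N then val v else if val i == 1%N then xf v else yf v.
have lab0 v : lab v (@Ordinal 3 0 isT) = val v by [].
have lab1 v : lab v (@Ordinal 3 1 isT) = xf v by [].
have lab2 v : lab v (@Ordinal 3 2 isT) = yf v by [].
have labw v i : lab v i \in wv v.
  rewrite /lab; case: ifP => _; first exact: bw.
  by case: ifP => _; [apply: xfw | case/and3P: (yfP v)].
have lab_inj v : injective (lab v).
  have d1 := xb v; case/and3P: (yfP v) => _ d2 d3.
  move=> i j; case: (ord3_cases i) => ->; case: (ord3_cases j) => -> //; rewrite ?lab0 ?lab1 ?lab2 => e;
    by move: d1 d2 d3; rewrite e eqxx.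
have injL : injective (fun p : V * 'I_3 => lab p.1 p.2).
  move=> [v i] [v' i'] /= e.
  have ew : wv v = wv v' by apply: (class_uniq partO (wvO v) (wvO v') (labw v i)); rewrite e.
  have ev : v = v'.
    apply: val_inj; apply: (Bw v' (val v) (valP v)); rewrite -ew; exact: bw.
  by subst v'; rewrite (lab_inj v _ _ e).
have cU : #|U| = (#|Omega| * 3)%N.
  rewrite -cardsT (card_partition partO) -sum1_card big_distrl /=.
  by apply: eq_bigr => w wO; rewrite c3 // mul1n.
have bij : bijective (fun p : V * 'I_3 => lab p.1 p.2).
  by apply: inj_card_bij injL _; rewrite card_prod card_ord cV cU.
have Wv_eq v : [set lab v i | i : 'I_3] = wv v.
  apply/eqP; rewrite eqEcard; apply/andP; split.
    by apply/subsetP => u /imsetP[i _ ->].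
  rewrite c3 // card_imset; [by rewrite card_ord | exact: lab_inj].
have eO : Omega = [set [set lab v i | i : 'I_3] | v : V].
  apply/setP => w; apply/idP/imsetP => [wO|[v _ ->]]; last by rewrite Wv_eq.
  move/forallP: tB => /(_ w); rewrite wO /= => /cards1P[u eu].
  have : u \in B :&: w by rewrite eu inE.
  rewrite inE => /andP[uB uw].
  exists (exist _ u uB) => //; rewrite Wv_eq /wv /=.
  by rewrite (def_pblock (trivO partO) wO uw).

case: bij => g gK1 gK2.
have labK : forall v i, g (lab v i) = (v, i) by move=> v i; exact: (gK1 (v, i)).
have gK : forall u, lab (g u).1 (g u).2 = u by move=> u; exact: (gK2 u).
pose Cb : 'M['F_2]_(#|V|, m) := \matrix_(j < #|V|) c (val (enum_val j)).
have CbB : (Cb :=: MS c B)%MS.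
  apply/eqmxP/andP; split.
    by apply/row_subP => j; rewrite rowK; apply: sub_MS; apply: valP.
  apply/MS_subP => u uB; have := row_sub (enum_rank (exist _ u uB : V)) Cb.
  by rewrite rowK enum_rankK.
have freeCb : row_free Cb.
  by rewrite /row_free CbB (eqP iB) cB cV.
have cxS v : (c (xf v) <= MS c (Sv v))%MS.
  apply: (mrank_span_conv (SvF v)).
  - by apply/negP => h; move: (xfB v); rewrite (subsetP (subsetDl B [set val v]) _ h).
  - have := subtrans_U1 partO (sSv v) (wvO v) (dSv v) (xfw v). done.
  - exact: xfr v.
have cxsub v : (c (xf v) <= Cb)%MS.
  by rewrite CbB; apply: submx_trans (cxS v) (MS_subset c (subsetDl B [set val v])).
pose kap v := c (xf v) *m pinvmx Cb.
pose A (w v : V) : 'F_2 := kap v 0 (enum_rank w).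
have Acol v : A_col A v = kap v by apply/rowP => j; rewrite mxE /A enum_valK.
pose col (u : U) : 'rV['F_2]_#|V| := let: (v, i) := g u in
  if val i == 0%N then unit_col v else if val i == 1%N then A_col A v else A_col A v + unit_col v.
have col0 v : col (lab v (@Ordinal 3 0 isT)) = unit_col v by rewrite /col labK.
have col1 v : col (lab v (@Ordinal 3 1 isT)) = A_col A v by rewrite /col labK.
have col2 v : col (lab v (@Ordinal 3 2 isT)) = A_col A v + unit_col v by rewrite /col labK.
have colB v : col (val v) = unit_col v by rewrite -(lab0 v) col0.
have colX v : col (xf v) = kap v by rewrite -(lab1 v) col1 Acol.
pose X2 := B :|: [set xf v | v : V].
have keyX u : u \in X2 -> col u *m Cb = c u.
  rewrite inE => /orP[uB|/imsetP[v _ ->]].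
    have -> : u = val (exist _ u uB : V) by [].
    by rewrite colB unit_delta -rowE rowK enum_rankK.
  by rewrite colX mulmxKpV.
have transf (S : {set U}) : S \subset X2 -> MS c S = MS col S *m Cb.
  move=> SX; apply/row_matrixP => i; rewrite row_mul !row_MS keyX //.
  exact: (subsetP SX _ (enum_valP i)).
have indep_tr (S : {set U}) : S \subset X2 -> col_indep c S = col_indep col S.
  by move=> SX; rewrite !col_indepE transf // mxrankMfree.
have sub_tr (S : {set U}) z : S \subset X2 -> z \in X2 ->
    (c z <= MS c S)%MS = (col z <= MS col S)%MS.
  by move=> SX zX; rewrite transf // -(keyX z zX) submxMfree.

have BX : B \subset X2 by apply: subsetUl.
have xX v : xf v \in X2 by rewrite inE; apply/orP; right; apply: imset_f.
have colSub (v0 : V) (S : {set U}) (P : pred V) : S \subset B ->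
    (forall s (sBB : s \in B), s \in S -> P (exist _ s sBB : V)) ->
    forall s, s \in S -> exists2 u, col s = unit_col u & P u.
  move=> SB HP s sS; have sBB := subsetP SB _ sS.
  by exists (exist _ s sBB : V); [exact: (colB (exist _ s sBB)) | apply: HP].
have Avv v : A v v = 0.
  have h : (col (xf v) <= MS col (Sv v))%MS.
    rewrite -sub_tr ?cxS //; apply: subset_trans BX; apply: subsetDl.
  have hs := @sub_supp _ _ col (Sv v) (fun u => u != v) _ (colSub v (Sv v) (fun u => u != v) (subsetDl _ _) _) h (enum_rank v).
  rewrite colX in hs; rewrite /A; apply: hs; last by rewrite enum_rankK eqxx.
  move=> s sBB; rewrite !inE => /andP[sv _]; apply: contra sv => /eqP <-; by [].
have sym1 v w : v != w -> A w v = 1 -> A v w = 1.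
  move=> vw Awv.
  set S0 := B :\ val v :\ val w.
  have inS0 u : (u \in S0) = [&& u != val w, u != val v & u \in B] by rewrite !inE.
  have S0B : S0 \subset B by apply/subsetP => u; rewrite inS0 => /and3P[].
  have S0Sv : S0 \subset Sv v by apply/subsetP => u; rewrite inS0 !inE => /and3P[_ -> ->].
  have S0X : S0 \subset X2 by apply: subset_trans BX.
  set I := xf v |: S0.
  have inI u : (u \in I) = (u == xf v) || (u \in S0) by rewrite !inE.
  have IX : I \subset X2 by apply/subsetP => u; rewrite inI => /orP[/eqP->|/(subsetP S0X)].
  have xvS0 : xf v \notin S0 by apply: contra (xfB v) => /(subsetP S0B).
  have colS0 := colSub v S0 (fun u => (u != v) && (u != w)) S0B.
  have colS0' : forall s, s \in S0 -> exists2 u, col s = unit_col u & (u != v) && (u != w).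
    apply: colS0 => s sBB; rewrite inS0 => /and3P[sw sv _].
    by apply/andP; split; [apply: contra sv | apply: contra sw] => /eqP <-.
  have nK : ~~ (A_col A v <= MS col S0)%MS.
    apply/negP => h; have := sub_supp (k := enum_rank w) colS0' h.
    rewrite enum_rankK eqxx andbF /= => /(_ isT); rewrite mxE enum_rankK Awv.
    by move/eqP; rewrite (negbTE F2_10).
  have iS0 : col_indep col S0 by rewrite -indep_tr //; apply: indep_sub iB S0B.
  have iI : col_indep col I by rewrite /I (indep_addP iS0 xvS0) colX -Acol.
  have sI : subtransversal Omega I.
    apply: subtrans_sub (subtrans_U1 partO (sSv v) (wvO v) (dSv v) (xfw v)) _.
    by apply: setUS.
  have IF : I \in F by rewrite inF indep_tr // iI sI.
  have vw' : wv v != wv w.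
    apply: contra vw => /eqP e; apply/eqP; apply: val_inj.
    by apply/esym; apply: (Bw v (val w) (valP w)); rewrite e bw.
  have dIw : [disjoint I & wv w].
    rewrite -setI_eq0; apply/eqP/setP => u; rewrite inE [RHS]inE.
    apply/negbTE/negP => /andP[]; rewrite inI => /orP[/eqP->|uS0] uw.
      move: vw' => /eqP; apply; exact: (class_uniq partO (wvO v) (wvO w) (xfw v) uw).
    move: uS0; rewrite inS0 => /and3P[uw' _ uB].
    by move: uw'; rewrite (Bw w u uB uw) eqxx.
  have Ew : (unit_col w <= MS col I)%MS.
    have r' : ((A_col A v + unit_col w)%R <= MS col S0)%MS.
      apply: (supp_sub (W := fun u => (u != v) && (u != w))).
        move=> u /andP[uv uw]; rewrite -colB; apply: sub_MS; rewrite inS0 (valP u) andbT.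
        by rewrite !val_eqE uv uw.
      move=> k; rewrite negb_and !negbK => /orP[/eqP e|/eqP e]; rewrite !mxE e ?eqxx.
        by rewrite Avv (negbTE vw) add0r.
      by rewrite Awv F2_add_self.
    have Kv : (A_col A v <= MS col I)%MS by rewrite Acol -colX; apply: sub_MS; apply: setU11.
    have -> : unit_col w = (A_col A v + (A_col A v + unit_col w))%R by rewrite addrA F2_add_self_mx add0r.
    apply: addmx_sub Kv _; apply: submx_trans r' _; apply: MS_subset; apply: subsetUr.
  case: goodF => _ _ _ Fskew _.
  have bxw : val w != xf w by rewrite eq_sym xb.
  have wI : val w \notin I by apply/negP => h; move: (disjointFr dIw h); rewrite bw.
  have xwI : xf w \notin I by apply/negP => h; move: (disjointFr dIw h); rewrite xfw.
  case: (Fskew I (wv w) (val w) (xf w) IF sI (wvO w) dIw (bw w) (xfw w) bxw) => h.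
    exfalso; move: h; rewrite inF indep_tr ?(indep_addP iI wI) ?colB ?Ew //.
    by apply/subsetP => u; rewrite in_setU1 => /orP[/eqP->|/(subsetP IX)] //; apply: (subsetP BX); apply: valP.
  case: (F2_cases (A v w)) => // h0; exfalso.
  move: h; rewrite inF indep_tr ?(indep_addP iI xwI) ?colX; last first.
    by apply/subsetP => u; rewrite in_setU1 => /orP[/eqP->|/(subsetP IX)].
  rewrite -Acol; apply/negP; rewrite negb_and negbK; apply/orP; left.
  apply: (supp_sub (W := fun u => u != v)).
    move=> u uv; case: (eqVneq u w) => [->//|uw].
    rewrite -colB; apply: sub_MS; rewrite inI inS0 (valP u) !val_eqE uw uv.
    by rewrite orbT.
  by move=> k; rewrite negbK => /eqP e; rewrite mxE e.
have symA : forall w v, A w v = A v w.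
  move=> w v; case: (eqVneq v w) => [->//|vw].
  case: (F2_cases (A w v)) => h; last by rewrite h (sym1 v w vw h).
  case: (F2_cases (A v w)) => h'; first by rewrite h h'.
  have wnv : w != v by rewrite eq_sym.
  by have := sym1 w v wnv h'; rewrite h => /eqP; rewrite eq_sym (negbTE F2_10).

set Zd := sheltered_ind (column_matroid col) Omega.
have skD := shelterD symA labK gK eO col0 col1 col2.
have goodZ : good Omega Zd.
  split.
  - exact: F0.
  - exact: Fdown.
  - by move=> I; rewrite inF => /andP[].
  - move=> I w x y IF sI wO dIw xw yw xy.
    have IM : I \in column_matroid col by move: IF; rewrite inF inE => /andP[] ->.
    have sx := subtrans_U1 partO sI wO dIw xw; have sy := subtrans_U1 partO sI wO dIw yw.
    case: (skD I w x y IM sI wO dIw xw yw xy) => h; [left|right]; rewrite inF;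
      rewrite inE in h; by rewrite h ?sx ?sy.
  - move=> S w sS cS wO dSw.
    have [x xw hx] := tightD symA labK gK eO partO col0 col1 col2 sS cS wO dSw.
    by exists x => //; apply: mrank_span.
have X2w : forall w, w \in Omega -> (1 < #|w :&: X2|)%N.
  move=> w; rewrite eO => /imsetP[v _ ->]; rewrite Wv_eq.
  apply/card_gt1P; exists (val v), (xf v); split.
  - by rewrite inE bw; apply: (subsetP BX); apply: valP.
  - by rewrite inE xfw xX.
  - by rewrite eq_sym xb.
have agreeX : forall I : {set U}, I \subset X2 -> (I \in F) = (I \in Zd).
  by move=> I IX; rewrite !inF indep_tr.
have eFZ : F = Zd.
  apply/setP => I; apply/idP/idP.
    exact: (agree_sub partO c3 goodF goodZ X2w agreeX).
  apply: (agree_sub partO c3 goodZ goodF X2w).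
  by move=> J JX; rewrite agreeX.
exists (column_matroid col); split.
  by split; [apply: col_matroid | exact: partO | exact: skD].
split; first exact: eFZ.
exists V, A, lab; split => //.
  by exists g.
by exists col.
Qed.

End P8.
Import P8.


Lemma from3 (U : finType) (Omega Ind : {set {set U}}) :
  (forall w, w \in Omega -> #|w| = 3) ->
  IAAI_sheltered Omega Ind -> tight Omega Ind /\ strictly_binary_mm Omega Ind.
Proof.
move=> c3 [M [shel [eInd [V [A [lab [symA bij eO [col [eM c0 c1 c2]]]]]]]]].
case: (bij) => g gK1 gK2.
have labK : forall v i, g (lab v i) = (v, i) by move=> v i; exact: (gK1 (v, i)).
have gK : forall u, lab (g u).1 (g u).2 = u by move=> u; exact: (gK2 u).
have partO : partition Omega [set: U] by case: shel.
split.
  split; first by move=> w wO; rewrite c3.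
  move=> S w sS cS wO dSw.
  have [x xw hx] := tightD symA labK gK eO partO c0 c1 c2 sS cS wO dSw.
  by exists x => //; rewrite eInd eM; apply: mrank_span.
exists M; split => //.
  by exists #|V|, col.
by rewrite eM; apply: (rankD col labK gK eO).
Qed.

Theorem theorem2p10 (U : finType) (Omega Ind : {set {set U}}) :
  q_matroid 3 Omega Ind ->
  [/\ (tight Omega Ind /\ binary_mm Omega Ind) <->
        (tight Omega Ind /\ strictly_binary_mm Omega Ind),
      (tight Omega Ind /\ strictly_binary_mm Omega Ind) <->
        IAAI_sheltered Omega Ind &
      IAAI_sheltered Omega Ind <->
        (tight Omega Ind /\ binary_mm Omega Ind)].
Proof.
move=> [[partO _ _ _] c3].
have d21 : tight Omega Ind /\ strictly_binary_mm Omega Ind -> tight Omega Ind /\ binary_mm Omega Ind.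
  by case=> t [M [s b _ e]]; split => //; exists M.
have d13 : tight Omega Ind /\ binary_mm Omega Ind -> IAAI_sheltered Omega Ind.
  by case=> t b; apply: from1.
have d32 : IAAI_sheltered Omega Ind -> tight Omega Ind /\ strictly_binary_mm Omega Ind.
  exact: from3.
split; split.
- by move=> h; apply: d32; apply: d13.
- exact: d21.
- by move=> h; apply: d13; apply: d21.
- exact: d32.
- by move=> h; apply: d21; apply: d32.
- exact: d13.
Qed.
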